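(* Let $n=2^m$ with $m\geq 3$. If $C\subseteq X^n$ is a diameter perfect code with minimum distance $5$ (i.e., any two distinct words of $C$ are at Hamming distance at least $5$, and there exists $A\subseteq X^n$ with all pairwise distances at most $4$ and $|C|\cdot|A|=|X^n|$), then $|C| = 2^{n-1}/n$.
   Context: $X^n$ is the set of words of length $n$ over $\{*,0,1\}$ containing exactly one $*$ (equivalently, ternary words of length $n$ and weight $n-1$), so $|X^n|=n2^{n-1}$. Hamming distance is the number of coordinates in which two words differ. A code $C\subseteq X^n$ with minimum distance $d$ is diameter perfect if there is a set $A\subseteq X^n$ of diameter at most $d-1$ with $|C|\cdot|A|=|X^n|$. *)

(* Defs.v *)
From mathcomp Require Import all_boot.
Set Implicit Arguments. Unset Strict Implicit. Unset Printing Implicit Defensive.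

(* Words of length n over {0,1,*}; symbol 0 = 0, 1 = 1, 2 = *. *)
Definition word (n : nat) := {ffun 'I_n -> 'I_3}.

Definition star : 'I_3 := inord 2.

Definition Xn (n : nat) : {set word n} :=
  [set w : word n | #|[set i | w i == star]| == 1].

Definition hdist (n : nat) (u v : word n) : nat := #|[set i | u i != v i]|.

Definition min_dist_ge (n d : nat) (C : {set word n}) : Prop :=
  forall u v, u \in C -> v \in C -> u != v -> d <= hdist u v.

Definition diam_le (n D : nat) (A : {set word n}) : Prop :=
  forall u v, u \in A -> v \in A -> hdist u v <= D.

Definition diameter_perfect (n d : nat) (C : {set word n}) : Prop :=
  C \subset Xn n /\ min_dist_ge d C /\
  exists A : {set word n}, A \subset Xn n /\ diam_le (d - 1) A /\
    #|C| * #|A| = #|Xn n|.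

(* Main.v *)
Require Import Defs.
From mathcomp Require Import all_boot.
From mathcomp Require Import zify.
Set Implicit Arguments. Unset Strict Implicit. Unset Printing Implicit Defensive.

Section Comb.
Variable I : finType.
Local Notation n := #|I|.

Definition sd (A B : {set I}) : {set I} := (A :\: B) :|: (B :\: A).

Lemma in_sd x A B : (x \in sd A B) = ((x \in A) != (x \in B)).
Proof. by rewrite !inE; case: (x \in A); case: (x \in B). Qed.

Lemma sdC A B : sd A B = sd B A.
Proof. by apply/setP=> x; rewrite !in_sd; case: (x \in A); case: (x \in B). Qed.

Lemma sd0 A : sd A set0 = A.
Proof. by apply/setP=> x; rewrite !in_sd inE; case: (x \in A). Qed.

Lemma sdK A B C : sd (sd A C) (sd B C) = sd A B.
Proof. by apply/setP=> x; rewrite !in_sd; case: (x \in A); case: (x \in B); case: (x \in C). Qed.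

Lemma sdKr A C : sd (sd A C) C = A.
Proof. by apply/setP=> x; rewrite !in_sd; case: (x \in A); case: (x \in C). Qed.

Lemma sd_eq0 A B : sd A B = set0 -> A = B.
Proof.
move=> h; apply/setP=> x; have : x \in sd A B = (x \in (set0 : {set I})) by rewrite h.
by rewrite in_sd inE; case: (x \in A); case: (x \in B).
Qed.

Lemma sdd A : sd A A = set0.
Proof. by apply/setP=> x; rewrite in_sd inE eqxx. Qed.

Lemma card_sd A B : #|sd A B| + 2 * #|A :&: B| = #|A| + #|B|.
Proof.
have h1 : [disjoint (A :\: B) & (B :\: A)].
  by rewrite -setI_eq0; apply/eqP/setP=> x; rewrite !inE; case: (x \in A); case: (x \in B).
rewrite /sd (cardsU (A :\: B)) (_ : (A :\: B) :&: (B :\: A) = set0); last first.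
  by apply/setP=> x; rewrite !inE; case: (x \in A); case: (x \in B).
rewrite cards0 subn0.
have ha := cardsID B A. have hb := cardsID A B. rewrite setIC in hb. lia.
Qed.

End Comb.

Lemma inj_le (T1 T2 : finType) (D : {set T1}) (E : {set T2}) (f : T1 -> T2) :
  {in D &, injective f} -> (forall x, x \in D -> f x \in E) -> #|D| <= #|E|.
Proof.
move=> inj sub; rewrite -(card_in_imset inj); apply: subset_leq_card.
by apply/subsetP=> y /imsetP[x xD ->]; apply: sub.
Qed.

Section Fib.
Variable I : finType.
Lemma fiber_le (Psi : {set {set I} * I}) K :
  (forall y, #|[set s | (y, s) \in Psi]| <= K) ->
  #|Psi| <= K * #|[set p.1 | p in Psi]|.
Proof.
move=> hK; rewrite -sum1_card (partition_big_imset fst) /=.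
rewrite mulnC -sum_nat_const; apply: leq_sum => y _.
rewrite sum1dep_card; apply: leq_trans (hK y).
apply: (@inj_le _ _ _ _ snd).
  by move=> [a b] [c d]; rewrite !inE /= => /andP[_ /eqP->] /andP[_ /eqP->] ->.
by move=> [a b]; rewrite !inE /= => /andP[h /eqP <-].
Qed.
End Fib.

Section Phi.
Variable I : finType.
Local Notation n := #|I|.

Definition dst (p q : {set I} * I) : nat :=
  #|sd p.1 q.1 :\: [set p.2; q.2]| + (if p.2 == q.2 then 0 else 2).

Variable Phi : {set {set I} * I}.
Hypothesis PA : forall p q, p \in Phi -> q \in Phi -> p != q -> dst p q <= 4.
Hypothesis PE : forall p q, p \in Phi -> q \in Phi -> ~~ odd #|sd p.1 q.1|.

Definition SS y := [set s | (y, s) \in Phi].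
Definition k y := #|SS y|.

Lemma card_split (z W : {set I}) : #|z| = #|z :&: W| + #|z :\: W|.
Proof. by rewrite cardsID. Qed.

Lemma sd_le4 p q : p \in Phi -> q \in Phi -> #|sd p.1 q.1| <= 4.
Proof.
move=> hp hq; have [->|neq] := eqVneq p q; first by rewrite sdd cards0.
have := PA hp hq neq; have := PE hp hq; rewrite /dst.
rewrite (card_split (sd p.1 q.1) [set p.2; q.2]).
have hW := subset_leq_card (subsetIr (sd p.1 q.1) [set p.2; q.2]).
rewrite cards2 in hW.
case: eqP hW => [e|ne] /=; [| lia].
move=> hW; move: (sd p.1 q.1 :&: _) hW => X hW. lia.
Qed.

Lemma far p q : p \in Phi -> q \in Phi -> #|sd p.1 q.1| = 4 -> p.2 != q.2 ->
  (p.2 \in sd p.1 q.1) && (q.2 \in sd p.1 q.1).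
Proof.
move=> hp hq h4 ne.
have neq : p != q by apply: contraNneq ne => ->.
have := PA hp hq neq; rewrite /dst (negbTE ne) addn2.
rewrite (card_split (sd p.1 q.1) [set p.2; q.2]) in h4.
move=> h.
have h2 : 2 <= #|sd p.1 q.1 :&: [set p.2; q.2]|.
  by move: h4 h; move: #|sd p.1 q.1 :&: _| #|sd p.1 q.1 :\: _| => a b; lia.
have : sd p.1 q.1 :&: [set p.2; q.2] = [set p.2; q.2].
  apply/eqP; rewrite eqEcard subsetIr cards2 ne /=; done.
move/setP=> e; have := e p.2; have := e q.2.
by rewrite !inE !eqxx /= orbT => /andP[-> _] /andP[-> _].
Qed.

Lemma far2 y y' s t : (y, s) \in Phi -> (y', t) \in Phi -> #|sd y y'| = 4 ->
  2 <= k y -> (s \in sd y y') && (t \in sd y y').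
Proof.
move=> h1 h2 h4 hk.
have [e|ne] := eqVneq s t; last by exact: (far h1 h2 h4 ne).
subst t.
have [s' hs' ne'] : exists2 s', s' \in SS y & s' != s.
  have := hk; rewrite /k => /card_gt1P[a [b [ha hb ab]]].
  have [eas|] := eqVneq a s; last by exists a.
  by exists b => //; rewrite -eas eq_sym.
rewrite inE in hs'.
by have := far hs' h2 h4 ne' => /= /andP[_ ->]; rewrite andbb.
Qed.

End Phi.

Lemma card_bigcup_le (T J : finType) (W : {set J}) (F : J -> {set T}) :
  #|\bigcup_(j in W) F j| <= \sum_(j in W) #|F j|.
Proof.
elim/big_rec2: _ => [|j A m _ h]; first by rewrite cards0.
by apply: leq_trans (leq_card_setU _ _) _; rewrite leq_add2l.
Qed.

Section Count.
Variable I : finType.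
Local Notation n := #|I|.

Lemma card2_eq (X : {set I}) w : #|X| == 2 -> w \in X ->
  X = [set w; odflt w [pick x in X :\ w]].
Proof.
move=> h2 hw; case: pickP => [x|none] /=.
  rewrite !inE => /andP[xw xX]; apply/eqP; rewrite eq_sym eqEcard.
  rewrite cards2 eq_sym xw (eqP h2) andbT; apply/subsetP=> z; rewrite !inE.
  by case/orP=> /eqP->.
exfalso; have : #|X :\ w| = 1 by have := cardsD1 w X; rewrite hw (eqP h2) /=; lia.
move/eqP/cards1P=> [x ex]; have := none x; rewrite ex inE eqxx //.
Qed.

Lemma Pw_le w : #|[set X : {set I} | (#|X| == 2) && (w \in X)]| <= n.-1.
Proof.
rewrite -(cardsC1 w).
apply: (@inj_le _ _ _ _ (fun X => odflt w [pick x in X :\ w])).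
  move=> X Y; rewrite !inE => /andP[hX wX] /andP[hY wY] e.
  by rewrite (card2_eq hX wX) (card2_eq hY wY) e.
move=> X; rewrite !inE => /andP[hX wX]; case: pickP => [x|none] /=.
  by rewrite !inE => /andP[].
exfalso; have : #|X :\ w| = 1 by have := cardsD1 w X; rewrite wX (eqP hX) /=; lia.
move/eqP/cards1P=> [x ex]; have := none x; rewrite ex inE eqxx //.
Qed.

Lemma meet_le (W : {set I}) :
  #|[set X : {set I} | (#|X| == 2) && (X :&: W != set0)]| <= #|W| * n.-1.
Proof.
have sub : [set X : {set I} | (#|X| == 2) && (X :&: W != set0)] \subset
   \bigcup_(w in W) [set X : {set I} | (#|X| == 2) && (w \in X)].
  apply/subsetP=> X; rewrite inE => /andP[h2 /set0Pn[w]]; rewrite inE => /andP[wX wW].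
  by apply/bigcupP; exists w => //; rewrite inE h2.
apply: leq_trans (subset_leq_card sub) _; apply: leq_trans (card_bigcup_le _ _) _.
rewrite -sum_nat_const; apply: leq_sum => w _; exact: Pw_le.
Qed.

Lemma sup_le (T : {set I}) m :
  #|[set X : {set I} | (T \subset X) && (#|X| == m)]| <= 'C(n, m - #|T|).
Proof.
rewrite -card_draws.
apply: (@inj_le _ _ _ _ (fun X => X :\: T)).
  move=> X Y; rewrite !inE => /andP[hX _] /andP[hY _] e.
  by rewrite -(setID X T) -(setID Y T) e (setIidPr hX) (setIidPr hY).
move=> X; rewrite !inE => /andP[hX /eqP hm].
by rewrite cardsD (setIidPr hX) hm.
Qed.

Lemma card_sub_le (U : {set I}) m :
  #|[set X : {set I} | (X \subset U) && (#|X| == m)]| <= 'C(#|U|, m).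
Proof. by rewrite -cards_draws; apply: subset_leq_card; apply/subsetP=> X; rewrite !inE. Qed.

Lemma L3 (U : {set I}) :
  #|[set X : {set I} | (#|X| == 4) && (#|X :&: U| == 3)]| <= 'C(#|U|, 3) * #|~: U|.
Proof.
have ec : #|[set [set x] | x in ~: U]| = #|~: U| by apply: card_imset; exact: set1_inj.
rewrite -cards_draws -ec -cardsX.
apply: (@inj_le _ _ _ _ (fun X => (X :&: U, X :&: ~: U))).
  move=> X Y _ _ [e1 e2].
  by rewrite -(setID X U) -(setID Y U) !setDE e1 e2.
move=> X; rewrite !inE => /andP[/eqP h4 /eqP h3]; rewrite /= subsetIr h3 eqxx /=.
have : #|X :&: ~: U| = 1 by have := cardsID U X; rewrite -setDE h3 h4; lia.
move/eqP/cards1P=> [x ex]; rewrite ex; apply/imsetP; exists x => //.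
have hx : x \in X :&: ~: U by rewrite ex set11.
by move: hx; rewrite inE => /andP[].
Qed.

Lemma fam4_le (Q : {set {set I}}) :
  (forall X, X \in Q -> #|X| = 4) ->
  (forall X Y, X \in Q -> Y \in Q -> 2 <= #|X :&: Y|) ->
  #|Q| <= 'C(n, 2) + 20 * (n - 4) + 15.
Proof.
move=> h4 h2.
have [Q0|[q0 hq0]] := set_0Vmem Q; first by rewrite Q0 cards0.
have B3 (U : {set I}) : #|U| <= 6 -> 4 <= #|U| ->
    #|[set X : {set I} | (#|X| == 4) && (#|X :&: U| == 3)]| <= 20 * (n - 4).
  move=> hU hU'; apply: leq_trans (L3 U) _; apply: leq_mul.
    by apply: leq_trans (leq_bin2l _ hU) _.
  have := cardsC U; lia.
have B4 (U : {set I}) : #|U| <= 6 ->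
    #|[set X : {set I} | (X \subset U) && (#|X| == 4)]| <= 15.
  by move=> hU; apply: leq_trans (card_sub_le U 4) _; apply: leq_trans (leq_bin2l _ hU) _.
have main (U T : {set I}) : #|U| <= 6 -> 4 <= #|U| ->
    (forall X, X \in Q -> [|| T \subset X, #|X :&: U| == 3 | X \subset U]) ->
    #|T| = 2 ->
    #|Q| <= 'C(n, 2) + 20 * (n - 4) + 15.
  move=> hU hU' cov hT.
  have sub : Q \subset [set X : {set I} | (T \subset X) && (#|X| == 4)] :|:
      [set X : {set I} | (#|X| == 4) && (#|X :&: U| == 3)] :|:
      [set X : {set I} | (X \subset U) && (#|X| == 4)].
    apply/subsetP=> X hX; rewrite !inE h4 // eqxx !andbT.
    by case/or3P: (cov X hX) => ->; rewrite ?orbT.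
  apply: leq_trans (subset_leq_card sub) _.
  apply: leq_trans (leq_card_setU _ _) _; apply: leq_add; last exact: B4.
  apply: leq_trans (leq_card_setU _ _) _; apply: leq_add; last exact: B3.
  by apply: leq_trans (sup_le _ _) _; rewrite hT.
have [hq1|none] := boolP [exists q1 in Q, #|q0 :&: q1| == 2].
  case/existsP: hq1 => q1 /andP[hq1 /eqP c01].
  apply: (main (q0 :|: q1) (q0 :&: q1)) => //.
      by have := cardsUI q0 q1; rewrite c01 (h4 _ hq0) (h4 _ hq1); lia.
    by have := cardsUI q0 q1; rewrite c01 (h4 _ hq0) (h4 _ hq1); lia.
  move=> X hX.
  have [//|nT] := boolP (q0 :&: q1 \subset X).
  have a0 := h2 _ _ hX hq0; have a1 := h2 _ _ hX hq1.
  have hXT : #|X :&: (q0 :&: q1)| <= 1.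
    have : #|X :&: (q0 :&: q1)| <= 2 by rewrite -c01; apply: subset_leq_card; apply: subsetIr.
    rewrite leq_eqVlt => /orP[/eqP e|]; last by [].
    exfalso; move/negP: nT; apply; have : X :&: (q0 :&: q1) = q0 :&: q1.
      by apply/eqP; rewrite eqEcard subsetIr e c01 leqnn.
    by move=> <-; apply: subsetIl.
  have eU : #|X :&: (q0 :|: q1)| = #|X :&: q0| + #|X :&: q1| - #|X :&: (q0 :&: q1)|.
    have := cardsUI (X :&: q0) (X :&: q1).
    rewrite -setIUr (_ : X :&: q0 :&: (X :&: q1) = X :&: (q0 :&: q1)); first lia.
    by rewrite setIACA setIid.
  have le4 : #|X :&: (q0 :|: q1)| <= 4 by rewrite -(h4 _ hX); apply: subset_leq_card; apply: subsetIl.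
  have [e3|ne3] := eqVneq #|X :&: (q0 :|: q1)| 3; first by rewrite /= ?orbT.
  have e4 : #|X :&: (q0 :|: q1)| = 4 by lia.
  have : X :&: (q0 :|: q1) = X by apply/eqP; rewrite eqEcard subsetIl e4 h4.
  by move=> <-; rewrite subsetIr !orbT.
have : 1 < #|q0| by rewrite h4.
case/card_gt1P=> a [b [ha hb ab]].
apply: (main q0 [set a; b]); [by rewrite h4 | by rewrite h4 | | ].
  move=> X hX; have := h2 _ _ hX hq0.
  have : #|X :&: q0| != 2.
    apply/negP=> /eqP e; move/negP: none; apply; apply/existsP; exists X; by rewrite hX setIC e.
  have le4 : #|X :&: q0| <= 4 by rewrite -(h4 _ hX); apply: subset_leq_card; apply: subsetIl.
  move=> ne2 ge2.
  have [e3|ne3] := eqVneq #|X :&: q0| 3; first by rewrite /= ?orbT.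
  have e4 : #|X :&: q0| = 4 by lia.
  have : X :&: q0 = X by apply/eqP; rewrite eqEcard subsetIl e4 h4.
  by move=> <-; rewrite subsetIr !orbT.
by rewrite cards2 ab.
Qed.

End Count.

Lemma two_bin2 m : 2 * 'C(m, 2) = m * m.-1.
Proof. elim: m => [|m IH] //; rewrite binS bin1; case: m IH => //= m IH; lia. Qed.

Section Cases.
Variable I : finType.
Local Notation n := #|I|.
Variable Phi : {set {set I} * I}.
Hypothesis PA : forall p q, p \in Phi -> q \in Phi -> p != q -> dst p q <= 4.
Hypothesis PE : forall p q, p \in Phi -> q \in Phi -> ~~ odd #|sd p.1 q.1|.
Variable s0 : I.
Hypothesis base : (set0, s0) \in Phi.

Local Notation k := (k Phi).
Local Notation SS := (SS Phi).

Lemma ycard p : p \in Phi -> [|| #|p.1| == 0, #|p.1| == 2 | #|p.1| == 4].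
Proof.
move=> hp; have h1 := sd_le4 PA PE base hp; have h2 := PE base hp.
rewrite /= sdC sd0 in h1 h2.
move: h1 h2; case: #|p.1| => [|[|[|[|[|[|m]]]]]] //.
Qed.

Definition Ph j := [set p in Phi | #|p.1| == j].

Lemma Phi_split : #|Phi| <= #|Ph 0| + #|Ph 2| + #|Ph 4|.
Proof.
have sub : Phi \subset Ph 0 :|: Ph 2 :|: Ph 4.
  apply/subsetP=> p hp; have := ycard hp; rewrite !inE hp /=.
  by case/or3P=> ->; rewrite ?orbT.
apply: leq_trans (subset_leq_card sub) _.
apply: leq_trans (leq_card_setU _ _) _; rewrite leq_add2r.
exact: leq_card_setU.
Qed.

Lemma Ph_sub j : Ph j \subset Phi.
Proof. by apply/subsetP=> p; rewrite inE => /andP[]. Qed.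

Lemma Ph_fib j K : (forall p, p \in Ph j -> k p.1 <= K) ->
  #|Ph j| <= K * #|[set p.1 | p in Ph j]|.
Proof.
move=> hK; apply: fiber_le => y.
have [s hs|none] := pickP (fun s => (y, s) \in Ph j).
  apply: leq_trans (hK _ hs); apply: subset_leq_card; apply/subsetP=> t.
  by rewrite !inE => /andP[].
rewrite (_ : [set s | (y, s) \in Ph j] = set0) ?cards0 //.
by apply/setP=> t; rewrite !inE; have := none t; rewrite inE => ->.
Qed.

Lemma Ph0_le : #|Ph 0| <= k set0.
Proof.
apply: (@inj_le _ _ _ _ snd).
  move=> [a b] [c d]; rewrite !inE /= => /andP[_ ha] /andP[_ hc] e.
  by rewrite (cards0_eq (eqP ha)) (cards0_eq (eqP hc)) e.
move=> [a b]; rewrite !inE /= => /andP[h ha].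
by rewrite -(cards0_eq (eqP ha)).
Qed.

Lemma k_le_n y : k y <= n.
Proof. exact: max_card. Qed.

Lemma Ph4_sup p : p \in Ph 4 -> 2 <= k set0 -> SS set0 \subset p.1.
Proof.
rewrite inE => /andP[hp h4] hk; apply/subsetP=> s; rewrite inE => hs.
have e : #|sd set0 p.1| = 4 by rewrite sdC sd0 (eqP h4).
have := far2 PA hs (_ : (p.1, p.2) \in Phi) e hk.
by rewrite -surjective_pairing sdC sd0 => /(_ hp) /andP[].
Qed.


Lemma Ph_in j p : p \in Ph j -> (p \in Phi) /\ #|p.1| = j.
Proof. by rewrite inE => /andP[h /eqP]. Qed.

Lemma caseA_Ph4 : 5 <= k set0 -> Ph 4 = set0.
Proof.
move=> hk; apply/setP=> p; rewrite [RHS]inE; apply/negbTE/negP=> hp.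
have := subset_leq_card (Ph4_sup hp (leq_trans _ hk)).
case/Ph_in: hp => _ ->; rewrite -/(k set0) => /(_ isT) h; lia.
Qed.

Lemma disj_sd (X Y : {set I}) : #|X| = 2 -> #|Y| = 2 -> X :&: Y = set0 -> #|sd X Y| = 4.
Proof. by move=> hX hY e; have := card_sd X Y; rewrite e cards0 hX hY; lia. Qed.

Lemma sd_disj (X Y : {set I}) : X :&: Y = set0 -> sd X Y = X :|: Y.
Proof.
move=> e; apply/setP=> x; rewrite in_sd inE.
have : x \in X :&: Y = false by rewrite e inE.
by rewrite inE; case: (x \in X); case: (x \in Y).
Qed.

Lemma Ph2_meet p1 p : p1 \in Ph 2 -> p \in Ph 2 -> 2 <= k p1.1 ->
  p1.1 :&: p.1 = set0 -> SS p1.1 \subset sd p1.1 p.1.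
Proof.
case/Ph_in=> h1 c1 /Ph_in[h c] hk e; apply/subsetP=> s; rewrite inE => hs.
have e4 := disj_sd c1 c e.
have hp : (p.1, p.2) \in Phi by rewrite -surjective_pairing.
by have /andP[] := far2 PA hs hp e4 hk.
Qed.

Lemma caseAi p1 : 5 <= k set0 -> p1 \in Ph 2 -> 5 <= k p1.1 -> #|Phi| < 2 * n ^ 2.
Proof.
move=> hk0 hp1 hk1.
have h4 := caseA_Ph4 hk0.
have h0 : #|Ph 0| <= n by apply: leq_trans Ph0_le (k_le_n _).
have h2 : #|Ph 2| <= n * #|[set p.1 | p in Ph 2]| by apply: Ph_fib => p _; exact: k_le_n.
have sub : [set p.1 | p in Ph 2] \subset
    [set X : {set I} | (#|X| == 2) && (X :&: p1.1 != set0)].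
  apply/subsetP=> X /imsetP[p hp ->]; rewrite inE.
  case/Ph_in: (hp) => _ ->; rewrite eqxx /=; apply/negP=> /eqP e.
  rewrite setIC in e.
  have := subset_leq_card (Ph2_meet hp1 hp (leq_trans _ hk1) e).
  rewrite -/(k p1.1) => /(_ isT).
  by case/Ph_in: hp1 => _ c1; case/Ph_in: hp => _ c; rewrite (disj_sd c1 c e); lia.
have := leq_trans (subset_leq_card sub) (meet_le _).
case/Ph_in: hp1 => _ ->.
have := Phi_split; rewrite h4 cards0.
have : 0 < n by apply/card_gt0P; exists s0.
move: (#|[set p.1 | p in Ph 2]|) h2 => Y h2 npos hs hY.
have h2' : #|Ph 2| <= n * (2 * n.-1) by apply: leq_trans h2 _; rewrite leq_mul2l hY orbT.
nia.
Qed.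

Definition xp (X : {set I}) := odflt s0 [pick x in X].

Lemma xp_in (X : {set I}) : X != set0 -> xp X \in X.
Proof. by case/set0Pn=> x hx; rewrite /xp; case: pickP => [y|/(_ x)] //=; rewrite hx. Qed.

Lemma Ph2_iii : (forall p, p \in Ph 2 -> 2 <= k p.1 -> p.2 \in p.1) ->
  #|Ph 2| <= n * n.-1.
Proof.
move=> hyp.
pose g (p : {set I} * I) := (p.1, if p.2 \in p.1 then p.2 else xp p.1).
have ginj : {in Ph 2 &, injective g}.
  move=> [X s] [Y t] hp hq; rewrite /g /= => -[e]; subst Y.
  have hp' := hp; have hq' := hq.
  case/Ph_in: hp => hp _; case/Ph_in: hq => hq _.
  have k1 : ~~ (2 <= k X) -> s = t.
    move=> hk; have : #|SS X| <= 1 by rewrite -/(k X); lia.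
    move/card_le1_eqP; apply; by rewrite inE.
  case: ifP => hs; case: ifP => ht /=.
  - by move=> ->.
  - move=> _; congr (_, _); apply: k1; apply/negP=> hk; by rewrite (hyp _ hq' hk) in ht.
  - move=> _; congr (_, _); apply: k1; apply/negP=> hk; by rewrite (hyp _ hp' hk) in hs.
  - by move=> _; congr (_, _); apply: k1; apply/negP=> hk; rewrite (hyp _ hp' hk) in hs.
rewrite -(card_in_imset ginj).
have hfib : forall y, #|[set s | (y, s) \in g @: Ph 2]| <= 2.
  move=> y; have [hs|none] := boolP [exists s, (y, s) \in g @: Ph 2].
    case/existsP: hs => s /imsetP[p hp [ey _]].
    have c : #|y| = 2 by rewrite ey; case/Ph_in: hp.
    suff: [set s | (y, s) \in g @: Ph 2] \subset y by move/subset_leq_card; rewrite c.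
    apply/subsetP=> t; rewrite inE.
    case/imsetP=> q hq [eq ->]; rewrite eq.
    case: ifP => // _; apply: xp_in; case/Ph_in: hq => _ cq.
    by apply/negP=> /eqP e0; rewrite e0 cards0 in cq.
  rewrite (_ : [set s | (y, s) \in g @: Ph 2] = set0) ?cards0 //.
  apply/setP=> t; rewrite !inE; apply/negP=> ht; move/negP: none; apply; by apply/existsP; exists t.
apply: leq_trans (fiber_le hfib) _.
rewrite -two_bin2 leq_mul2l /=.
rewrite -card_draws; apply: subset_leq_card; apply/subsetP=> X /imsetP[q /imsetP[p hp ->] ->].
by rewrite inE /=; case/Ph_in: hp => _ ->.
Qed.

Lemma Ph2_ii p1 : p1 \in Ph 2 -> 2 <= k p1.1 -> p1.2 \notin p1.1 ->
  (forall p, p \in Ph 2 -> k p.1 <= 4) -> #|Ph 2| <= 12 * n.-1.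
Proof.
move=> hp1 hk1 hs1 h4.
apply: leq_trans (Ph_fib h4) _.
rewrite (_ : 12 = 4 * 3) // -mulnA leq_mul2l /=.
have c3 : #|p1.2 |: p1.1| = 3 by rewrite cardsU1 hs1; case/Ph_in: hp1 => _ ->.
rewrite -c3; apply: leq_trans (meet_le _); apply: subset_leq_card.
apply/subsetP=> X /imsetP[p hp ->]; rewrite inE.
case/Ph_in: (hp) => _ ->; rewrite eqxx /=.
have [e|ne] := eqVneq (p1.1 :&: p.1) set0; last first.
  case/set0Pn: ne => x; rewrite inE => /andP[a b]; apply/set0Pn; exists x.
  by rewrite !inE b a orbT.
have := Ph2_meet hp1 hp hk1 e; move/subsetP/(_ p1.2).
case/Ph_in: (hp1) => hq1 _.
rewrite inE -surjective_pairing => /(_ hq1); rewrite sd_disj // inE (negbTE hs1) /= => hin.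
by apply/set0Pn; exists p1.2; rewrite !inE eqxx hin.
Qed.

Lemma Ph2_bound : (forall p, p \in Ph 2 -> k p.1 <= 4) ->
  #|Ph 2| <= 12 * n.-1 \/ #|Ph 2| <= n * n.-1.
Proof.
move=> h4.
have [hp|none] := boolP [exists p in Ph 2, (2 <= k p.1) && (p.2 \notin p.1)].
  case/existsP: hp => p /andP[hp /andP[hk hs]]; left; exact: Ph2_ii hp hk hs h4.
right; apply: Ph2_iii => p hp hk; apply/negPn/negP=> hs; move/negP: none; apply.
by apply/existsP; exists p; rewrite hp hk hs.
Qed.

Lemma n_pos : 0 < n.
Proof. by apply/card_gt0P; exists s0. Qed.

Lemma Y_sub j : [set p.1 | p in Ph j] \subset [set X : {set I} | #|X| == j].
Proof. by apply/subsetP=> X /imsetP[p hp ->]; rewrite inE; case/Ph_in: hp => _ ->. Qed.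

Lemma Y_le j : #|[set p.1 | p in Ph j]| <= 'C(n, j).
Proof. by rewrite -card_draws; apply: subset_leq_card; apply: Y_sub. Qed.

Lemma caseA : 5 <= k set0 -> 7 <= n -> #|Phi| < 2 * n ^ 2.
Proof.
move=> hk hn.
have [h|none] := boolP [exists p in Ph 2, 4 < k p.1].
  by case/existsP: h => p /andP[hp hkp]; exact: caseAi hk hp hkp.
have h4 : forall p, p \in Ph 2 -> k p.1 <= 4.
  move=> p hp; rewrite leqNgt; apply/negP=> hkp; move/negP: none; apply.
  by apply/existsP; exists p; rewrite hp hkp.
have := Phi_split; rewrite caseA_Ph4 // cards0 addn0.
have h0 : #|Ph 0| <= n by apply: leq_trans Ph0_le (k_le_n _).
case: (Ph2_bound h4) => h2; nia.
Qed.

Lemma caseB : (forall p, p \in Phi -> k p.1 <= 4) -> 3 <= k set0 -> 8 <= n ->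
  #|Phi| < 2 * n ^ 2.
Proof.
move=> hall hk hn.
have h4 : forall p, p \in Ph 2 -> k p.1 <= 4 by move=> p /Ph_in[hp _]; exact: hall.
have h0 : #|Ph 0| <= 4 by apply: leq_trans Ph0_le (hall _ base).
have h44 : #|Ph 4| <= 4 * n.
  apply: leq_trans (Ph_fib (j := 4) (K := 4) _) _.
    by move=> p /Ph_in[hp _]; exact: hall.
  rewrite leq_mul2l /=.
  have sub : [set p.1 | p in Ph 4] \subset [set X : {set I} | (SS set0 \subset X) && (#|X| == 4)].
    apply/subsetP=> X /imsetP[p hp ->]; rewrite inE (Ph4_sup hp) ?(leq_trans _ hk) //=.
    by case/Ph_in: hp => _ ->.
  apply: leq_trans (subset_leq_card sub) _; apply: leq_trans (sup_le _ _) _.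
  have := hall _ base; rewrite -/(k set0) /= => hk4.
  have : (4 - k set0 == 0) || (4 - k set0 == 1) by lia.
  by case/orP=> /eqP ->; rewrite ?bin0 ?bin1 ?n_pos.
have := Phi_split.
case: (Ph2_bound h4) => h2; nia.
Qed.

Lemma caseC : (forall p, p \in Phi -> k p.1 <= 2) -> 2 <= k set0 -> 2 <= n ->
  #|Phi| < 2 * n ^ 2.
Proof.
move=> hall hk hn.
have h0 : #|Ph 0| <= 2 by apply: leq_trans Ph0_le (hall _ base).
have h2 : #|Ph 2| <= 2 * 'C(n, 2).
  apply: leq_trans (Ph_fib (j := 2) (K := 2) _) _; first by move=> p /Ph_in[hp _]; exact: hall.
  by rewrite leq_mul2l Y_le orbT.
have h44 : #|Ph 4| <= 2 * 'C(n, 2).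
  apply: leq_trans (Ph_fib (j := 4) (K := 2) _) _; first by move=> p /Ph_in[hp _]; exact: hall.
  rewrite leq_mul2l /=.
  have sub : [set p.1 | p in Ph 4] \subset [set X : {set I} | (SS set0 \subset X) && (#|X| == 4)].
    apply/subsetP=> X /imsetP[p hp ->]; rewrite inE (Ph4_sup hp) //=.
    by case/Ph_in: hp => _ ->.
  apply: leq_trans (subset_leq_card sub) _; apply: leq_trans (sup_le _ _) _.
  by have := hall _ base; rewrite -/(k set0) /= => hk2; have -> : 4 - k set0 = 2 by lia.
have := Phi_split; have := two_bin2 n; nia.
Qed.

Lemma int2 p q : p \in Phi -> q \in Phi -> #|p.1| = 4 -> #|q.1| = 4 -> 2 <= #|p.1 :&: q.1|.
Proof.
move=> hp hq c1 c2; have := sd_le4 PA PE hp hq; have := card_sd p.1 q.1; rewrite c1 c2; lia.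
Qed.

Lemma int1 p q : p \in Phi -> q \in Phi -> #|p.1| = 2 -> #|q.1| = 4 -> p.1 :&: q.1 != set0.
Proof.
move=> hp hq c1 c2; have := sd_le4 PA PE hp hq; have := card_sd p.1 q.1; rewrite c1 c2.
by move=> h1 h2; rewrite -cards_eq0; apply/eqP=> e; rewrite e in h1; lia.
Qed.

Lemma caseD : (forall p, p \in Phi -> k p.1 <= 1) -> (n = 8 \/ 16 <= n) ->
  #|Phi| < 2 * n ^ 2.
Proof.
move=> hall hn.
have h0 : #|Ph 0| <= 1 by apply: leq_trans Ph0_le (hall _ base).
have f j : #|Ph j| <= #|[set p.1 | p in Ph j]|.
  rewrite -[X in _ <= X]mul1n; apply: Ph_fib.
  by move=> p /Ph_in[hp _]; exact: hall.
have hs := Phi_split.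
case: hn => [e8|h16].
  have := f 2; have := f 4; have := Y_le 2; have := Y_le 4; rewrite e8.
  have -> : 'C(8, 2) = 28 by []. have -> : 'C(8, 4) = 70 by [].
  lia.
have [e4|[q0 hq0]] := set_0Vmem (Ph 4).
  rewrite e4 cards0 in hs; have := f 2; have := Y_le 2; have := two_bin2 n; nia.
have hq4 : #|[set p.1 | p in Ph 4]| <= 'C(n, 2) + 20 * (n - 4) + 15.
  apply: fam4_le.
    by move=> X /imsetP[p hp ->]; case/Ph_in: hp.
  move=> X Y /imsetP[p hp ->] /imsetP[q hq ->].
  by case/Ph_in: hp => hp c1; case/Ph_in: hq => hq c2; exact: int2.
have hq2 : #|[set p.1 | p in Ph 2]| <= 4 * n.-1.
  case/Ph_in: (hq0) => hq0' c0.
  rewrite -c0; apply: leq_trans (meet_le _); apply: subset_leq_card.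
  apply/subsetP=> X /imsetP[p hp ->]; rewrite inE.
  case/Ph_in: hp => hp c; rewrite c eqxx /=; exact: int1 hp hq0' c c0.
have := f 2; have := f 4; have := two_bin2 n; nia.
Qed.

End Cases.

Section Tr.
Variable I : finType.
Local Notation n := #|I|.

Definition trf (y0 : {set I}) (p : {set I} * I) := (sd p.1 y0, p.2).

Lemma trfK y0 : involutive (trf y0).
Proof. by move=> [y s]; rewrite /trf /= sdKr. Qed.

Definition tr (Phi : {set {set I} * I}) y0 := trf y0 @: Phi.

Lemma tr_in Phi y0 p : (p \in tr Phi y0) = (trf y0 p \in Phi).
Proof.
apply/imsetP/idP => [[q hq ->]|h]; first by rewrite trfK.
by exists (trf y0 p) => //; rewrite trfK.
Qed.

Lemma dst_tr y0 p q : dst (trf y0 p) (trf y0 q) = dst p q.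
Proof. by rewrite /dst /trf /= sdK. Qed.

Lemma comb (N : nat) (Phi : {set {set I} * I}) : #|I| = N ->
  (forall p q, p \in Phi -> q \in Phi -> p != q -> dst p q <= 4) ->
  (forall p q, p \in Phi -> q \in Phi -> ~~ odd #|sd p.1 q.1|) ->
  (N = 8 \/ 16 <= N) -> Phi != set0 -> #|Phi| < 2 * N ^ 2.
Proof.
move=> hN PA PE; rewrite -hN => hn /set0Pn[p0 hp0].
have trok y0 : let Psi := tr Phi y0 in
   [/\ (forall p q, p \in Psi -> q \in Psi -> p != q -> dst p q <= 4),
       (forall p q, p \in Psi -> q \in Psi -> ~~ odd #|sd p.1 q.1|),
       #|Psi| = #|Phi| &
       forall y, k Psi y = k Phi (sd y y0)].
  split.
  - move=> p q; rewrite !tr_in => hp hq ne; rewrite -(dst_tr y0); apply: PA => //.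
    apply/negP => /eqP e; move/negP: ne; apply; apply/eqP; exact: (can_inj (trfK y0) e).
  - move=> p q; rewrite !tr_in => hp hq; have := PE _ _ hp hq; by rewrite /trf /= sdK.
  - by apply: card_imset; exact: (can_inj (trfK y0)).
  - by move=> y; rewrite /k /SS; apply: eq_card => s; rewrite !inE tr_in.
have base (p : {set I} * I) : p \in Phi -> (set0, p.2) \in tr Phi p.1.
  by move=> hp; rewrite tr_in /trf /= sdC sd0 -surjective_pairing.
have [h5|n5] := boolP [exists p in Phi, 4 < k Phi p.1].
  case/existsP: h5 => p /andP[hp hk].
  case: (trok p.1) => A1 A2 A3 A4; rewrite -A3.
  apply: (caseA A1 A2 (base _ hp)); first by rewrite A4 sdC sd0.
  by case: hn => [->|]; lia.
have all4 : forall p, p \in Phi -> k Phi p.1 <= 4.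
  move=> p hp; rewrite leqNgt; apply/negP=> h; move/negP: n5; apply.
  by apply/existsP; exists p; rewrite hp h.
have [h3|n3] := boolP [exists p in Phi, 2 < k Phi p.1].
  case/existsP: h3 => p /andP[hp hk].
  case: (trok p.1) => A1 A2 A3 A4; rewrite -A3.
  apply: (caseB A1 A2 (base _ hp)); last by case: hn => [->|]; lia.
    move=> q; rewrite tr_in A4 => hq; exact: all4 hq.
  by rewrite A4 sdC sd0.
have all2 : forall p, p \in Phi -> k Phi p.1 <= 2.
  move=> p hp; rewrite leqNgt; apply/negP=> h; move/negP: n3; apply.
  by apply/existsP; exists p; rewrite hp h.
have [h2|n2] := boolP [exists p in Phi, 1 < k Phi p.1].
  case/existsP: h2 => p /andP[hp hk].
  case: (trok p.1) => A1 A2 A3 A4; rewrite -A3.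
  apply: (caseC A1 A2 (base _ hp)); last by case: hn => [->|]; lia.
    move=> q; rewrite tr_in A4 => hq; exact: all2 hq.
  by rewrite A4 sdC sd0.
have all1 : forall p, p \in Phi -> k Phi p.1 <= 1.
  move=> p hp; rewrite leqNgt; apply/negP=> h; move/negP: n2; apply.
  by apply/existsP; exists p; rewrite hp h.
case: (trok p0.1) => A1 A2 A3 A4; rewrite -A3.
apply: (caseD A1 A2 (base _ hp0)) => //.
move=> q; rewrite tr_in A4 => hq; exact: all1 hq.
Qed.

End Tr.

Section Parity.
Variable I : finType.
Variable x0 : I.
Local Notation n := #|I|.

Lemma odd_sd1 (y : {set I}) : odd #|sd y [set x0]| = ~~ odd #|y|.
Proof.
have := card_sd y [set x0]; rewrite cards1 => /(congr1 odd).
rewrite !oddD /=.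
by case: (odd #|sd y [set x0]|); case: (odd #|y :&: [set x0]|); case: (odd #|y|).
Qed.

Definition Ev := [set y : {set I} | ~~ odd #|y|].
Definition Od := [set y : {set I} | odd #|y|].

Lemma card_Ev_Od : #|Ev| = #|Od|.
Proof.
apply/eqP; rewrite eqn_leq; apply/andP; split.
  apply: (@inj_le _ _ _ _ (fun y => sd y [set x0])).
    by move=> a b _ _ /(congr1 (fun z => sd z [set x0])); rewrite !sdKr.
  by move=> y; rewrite !inE odd_sd1.
apply: (@inj_le _ _ _ _ (fun y => sd y [set x0])).
  by move=> a b _ _ /(congr1 (fun z => sd z [set x0])); rewrite !sdKr.
by move=> y; rewrite !inE odd_sd1 => ->.
Qed.

Lemma card_Ev : #|Ev| = 2 ^ n.-1.
Proof.
have h : #|Ev| + #|Od| = 2 ^ n.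
  have -> : Od = ~: Ev by apply/setP=> y; rewrite !inE negbK.
  by rewrite cardsC -cardsT -powersetT card_powerset cardsT.
have : 0 < n by apply/card_gt0P; exists x0.
move=> hp; rewrite -card_Ev_Od in h.
have e : 2 ^ n = 2 * 2 ^ n.-1 by rewrite -expnS prednK.
lia.
Qed.

Lemma card_Od : #|Od| = 2 ^ n.-1.
Proof. by rewrite -card_Ev_Od card_Ev. Qed.

End Parity.

Section Words.
Variable n : nat.
Variable x0 : 'I_n.

Lemma val_star : val star = 2. Proof. by rewrite /star /= inordK. Qed.

Definition st (w : word n) : 'I_n := odflt x0 [pick i | w i == star].
Definition ones (w : word n) : {set 'I_n} := [set i | val (w i) == 1].
Definition ev (w : word n) := if odd #|ones w| then st w |: ones w else ones w.
Definition key (w : word n) := (ev w, st w).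

Lemma st_spec w : w \in Xn n -> forall i, (w i == star) = (i == st w).
Proof.
rewrite inE => /cards1P[s es].
have hs : forall i, (w i == star) = (i == s).
  move=> i; have : (i \in [set i | w i == star]) = (i \in [set s]) by rewrite es.
  by rewrite !inE.
have -> : st w = s.
  rewrite /st; case: pickP => [i hi|none] /=; first by apply/eqP; rewrite -hs.
  by have := none s; rewrite hs eqxx.
exact: hs.
Qed.

Lemma nonstar (x : 'I_3) : x != star -> (val x == 0) || (val x == 1).
Proof.
move=> h; have : val x < 3 := ltn_ord x. have : val x != 2.
  by apply: contra h => /eqP e; apply/eqP/val_inj; rewrite /= e val_star.
lia.
Qed.

Lemma st_notin w : w \in Xn n -> st w \notin ones w.
Proof.
move=> hw; rewrite inE.
have : w (st w) == star by rewrite (st_spec hw) eqxx.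
by move/eqP->; rewrite val_star.
Qed.

Lemma ev_mem w i : w \in Xn n -> i != st w -> (i \in ev w) = (val (w i) == 1).
Proof.
move=> hw ne; rewrite /ev; case: ifP => _; last by rewrite inE.
by rewrite !inE (negbTE ne).
Qed.

Lemma ev_even w : w \in Xn n -> ~~ odd #|ev w|.
Proof.
move=> hw; rewrite /ev; case: ifP => h; last by rewrite h.
by rewrite cardsU1 (st_notin hw) /= h.
Qed.

Lemma key_inj : {in Xn n &, injective key}.
Proof.
move=> u v hu hv [e1 e2]; apply/ffunP=> i.
have [ei|ne] := eqVneq i (st u).
  have := st_spec hu i; have := st_spec hv i; rewrite -e2 ei eqxx.
  by move/eqP => -> /eqP ->.
have ne' : i != st v by rewrite -e2.
have hu1 := ev_mem hu ne; have hv1 := ev_mem hv ne'; rewrite e1 hv1 in hu1.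
have nu : u i != star by rewrite (st_spec hu) ne.
have nv : v i != star by rewrite (st_spec hv) ne'.
apply/val_inj; move: hu1 (nonstar nu) (nonstar nv).
by case: (val (u i)) => [|[|]]; case: (val (v i)) => [|[|]].
Qed.

Lemma hdist_key u v : u \in Xn n -> v \in Xn n -> hdist u v = dst (key u) (key v).
Proof.
move=> hu hv; rewrite /hdist /dst /key /=.
set su := st u; set sv := st v; set W := [set su; sv].
have eq : [set i | u i != v i] =
   (sd (ev u) (ev v) :\: W) :|: (if su == sv then set0 else W).
  apply/setP=> i; rewrite !inE.
  have [eu|nu] := eqVneq i su.
    have us : u i == star by rewrite (st_spec hu) eu.
    have [ev'|nv] := eqVneq i sv.
      have vs : v i == star by rewrite (st_spec hv) ev'.
      have e : su == sv by rewrite -eu -ev'.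
      by rewrite (eqP us) (eqP vs) eqxx e in_set0.
    have vn : v i != star by rewrite (st_spec hv).
    have ne : (su == sv) = false by apply/negbTE; rewrite -eu.
    rewrite ne /W !inE -eu eqxx /= ?orbT.
    by rewrite (eqP us) eq_sym.
  have un : u i != star by rewrite (st_spec hu).
  have [ev'|nv] := eqVneq i sv.
    have vs : v i == star by rewrite (st_spec hv) ev'.
    have ne : (su == sv) = false by apply/negbTE; rewrite -ev' eq_sym.
    rewrite ne /W !inE -ev' eqxx /= ?orbT.
    by rewrite (eqP vs).
  have vn : v i != star by rewrite (st_spec hv).
  have -> : (i \in (if su == sv then set0 else W)) = false.
    by case: ifP => _; rewrite !inE ?(negbTE nu) ?(negbTE nv).
  rewrite orbF /= (ev_mem hu nu) (ev_mem hv nv).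
  rewrite -(inj_eq val_inj); move: (nonstar un) (nonstar vn).
  by case: (val (u i)) => [|[|]]; case: (val (v i)) => [|[|]].
rewrite eq; case: ifP => [e|ne].
  by rewrite setU0 addn0.
rewrite cardsU (_ : (sd (ev u) (ev v) :\: W) :&: W = set0).
  by rewrite cards0 subn0 cards2 ne.
by apply/setP=> i; rewrite in_setI in_setD in_set0 andbC andbA andbN.
Qed.

End Words.

Section Count2.
Variable n : nat.
Variable x0 : 'I_n.

Local Notation st := (st x0).
Local Notation ev := (ev x0).
Local Notation key := (key x0).

Definition one3 : 'I_3 := inord 1.
Definition zero3 : 'I_3 := inord 0.

Definition mk (y : {set 'I_n}) (s : 'I_n) : word n :=
  [ffun i => if i == s then star else if i \in y then one3 else zero3].

Lemma mk_X y s : mk y s \in Xn n.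
Proof.
rewrite inE; apply/cards1P; exists s; apply/setP=> i; rewrite !inE ffunE.
case: (i == s); first by rewrite eqxx.
by case: (i \in y); apply/eqP=> /(congr1 val); rewrite /= !inordK.
Qed.

Lemma mk_st y s : st (mk y s) = s.
Proof. by apply/eqP; rewrite eq_sym -(st_spec x0 (mk_X y s)) ffunE eqxx. Qed.

Lemma mk_ones y s : ones (mk y s) = y :\ s.
Proof.
apply/setP=> i; rewrite !inE ffunE.
have [->|ne] := eqVneq i s; first by rewrite /= val_star ?eqxx ?setD11.
by case: (i \in y); rewrite /= inordK.
Qed.

Lemma mk_key (y : {set 'I_n}) (s : 'I_n) : ~~ odd #|y| -> key (mk y s) = (y, s).
Proof.
move=> hy; rewrite /key /ev mk_st mk_ones; congr (_, _).
have [hs|hs] := boolP (s \in y).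
  have c : #|y :\ s|.+1 = #|y| by have := cardsD1 s y; rewrite hs /= add1n.
  have o : odd #|y :\ s| by move: hy; rewrite -c /= negbK.
  rewrite o; apply/setP=> i; rewrite !inE; case: eqP => // ->; by rewrite hs.
have -> : y :\ s = y by apply/setP=> i; rewrite !inE; case: eqP => // ->; rewrite (negbTE hs).
by rewrite (negbTE hy).
Qed.

Lemma key_img : key @: Xn n = setX (Ev 'I_n) [set: 'I_n].
Proof.
apply/setP=> [[y s]]; rewrite !inE andbT; apply/imsetP/idP.
  by case=> w hw [-> _]; exact: ev_even.
by move=> hy; exists (mk y s); [exact: mk_X | rewrite mk_key].
Qed.

Lemma card_Xn : #|Xn n| = n * 2 ^ n.-1.
Proof.
rewrite -(card_in_imset (key_inj (x0 := x0))) key_img cardsX cardsT card_ord.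
by rewrite (card_Ev x0) card_ord mulnC.
Qed.

End Count2.

Lemma sd_cancel (I : finType) (a b x y : {set I}) : sd a x = sd b y -> sd a b = sd y x.
Proof.
move=> e; apply/setP=> z; have : (z \in sd a x) = (z \in sd b y) by rewrite e.
by rewrite !in_sd; case: (z \in a); case: (z \in b); case: (z \in x); case: (z \in y).
Qed.

Section Main.
Variable n : nat.
Variable x0 : 'I_n.
Local Notation st := (st x0).
Local Notation ev := (ev x0).
Local Notation key := (key x0).

Lemma anticode_bound (A : {set word n}) :
  A \subset Xn n -> diam_le 4 A -> A != set0 -> (n = 8 \/ 16 <= n) ->
  #|A| < 2 * n ^ 2.
Proof.
move=> AX dA Ane hn.
have kinj : {in A &, injective key}.
  by move=> u v hu hv; apply: key_inj; apply: (subsetP AX).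
rewrite -(card_in_imset kinj).
apply: (@comb (ordinal n) n (key @: A) (card_ord n)).
- move=> p q /imsetP[u hu ->] /imsetP[v hv ->] ne.
  rewrite -hdist_key; try by apply: (subsetP AX).
  by apply: dA.
- move=> p q /imsetP[u hu ->] /imsetP[v hv ->] /=.
  have := card_sd (ev u) (ev v) => /(congr1 odd).
  rewrite !oddD /= (negbTE (ev_even x0 (subsetP AX _ hu))) (negbTE (ev_even x0 (subsetP AX _ hv))).
  by case: (odd #|sd _ _|); case: (odd #|_ :&: _|).
- by [].
- by case/set0Pn: Ane => u hu; apply/set0Pn; exists (key u); apply: imset_f.
Qed.

Lemma code_bound (C : {set word n}) :
  C \subset Xn n -> min_dist_ge 5 C -> #|C| * n <= 2 ^ n.-1.
Proof.
move=> CX md.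
have h1 : #|setX C [set: 'I_n]| = #|C| * n by rewrite cardsX cardsT card_ord.
have h2 : #|Od 'I_n| = 2 ^ n.-1.
  have := card_Od x0; have -> : #|'I_n| = n := card_ord n; done.
rewrite -h1 -h2.
apply: (@inj_le _ _ _ _ (fun p => sd (ev p.1) [set p.2])).
  move=> [c i] [c' j]; rewrite !inE /= !andbT => hc hc' e.
  have e' := sd_cancel e.
  have le2 : #|sd (ev c) (ev c')| <= 2.
    rewrite e'; have : sd [set j] [set i] \subset [set j; i].
      by apply/subsetP=> z; rewrite in_sd !inE; case: (z == j); case: (z == i).
    move/subset_leq_card => h; apply: leq_trans h _; rewrite cards2; by case: (j != i).
  have [ecc|ne] := eqVneq c c'.
    subst c'; rewrite sdd in e'.
    have := sd_eq0 (esym e') => /setP/(_ j); rewrite !inE eqxx => /esym/eqP ->; done.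
  exfalso; have := md _ _ hc hc' ne.
  rewrite (hdist_key x0 (subsetP CX _ hc) (subsetP CX _ hc')) /dst /key /=.
  have := subset_leq_card (subsetDl (sd (ev c) (ev c')) [set st c; st c']).
  move: le2; move: (#|sd (ev c) (ev c') :\: _|) (#|sd (ev c) (ev c')|) => a b.
  case: (st c == st c'); lia.
move=> [c i]; rewrite !inE /= andbT => hc.
have := card_sd (ev c) [set i] => /(congr1 odd).
rewrite !oddD /= cards1 /= (negbTE (ev_even x0 (subsetP CX _ hc))).
by case: (odd #|sd _ _|); case: (odd #|_ :&: _|).
Qed.

End Main.

Lemma pow2_arith (m c a : nat) : 3 <= m ->
  c * a = 2 ^ m * 2 ^ (2 ^ m).-1 -> a < 2 * (2 ^ m) ^ 2 -> c * 2 ^ m <= 2 ^ (2 ^ m).-1 ->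
  c = 2 ^ (2 ^ m - 1) %/ 2 ^ m.
Proof.
move=> hm hca ha hc.
set N := 2 ^ m in hca ha hc *.
have e : 2 ^ m * 2 ^ N.-1 = 2 ^ (m + N.-1) by rewrite expnD.
rewrite e in hca.
have : c %| 2 ^ (m + N.-1) by rewrite -hca dvdn_mulr.
case/(@dvdn_pfactor 2 c _ isT) => x hx hcx.
have ea : a = 2 ^ (m + N.-1 - x).
  have : 2 ^ x * a = 2 ^ x * 2 ^ (m + N.-1 - x) by rewrite -expnD subnKC // -hcx.
  by move/eqP; rewrite eqn_mul2l expn_eq0 /= => /eqP.
have h1 : m + N.-1 - x < 2 * m + 1.
  rewrite -(ltn_exp2l _ _ (isT : 1 < 2)) -ea expnD expnM muln2.
  have -> : (2 ^ 2) ^ m = (2 ^ m) ^ 2 by rewrite -!expnM mulnC.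
  by rewrite -mul2n.
have h2 : x + m <= N.-1.
  by rewrite -(leq_exp2l _ _ (isT : 1 < 2)) expnD -hcx.
rewrite hcx subn1 -expnB //; last by lia.
by congr (_ ^ _); lia.
Qed.

Theorem theorem2 (m : nat) (C : {set word (2 ^ m)}) :
  3 <= m ->
  diameter_perfect 5 C ->
  #|C| = 2 ^ (2 ^ m - 1) %/ 2 ^ m.
Proof.
move=> hm [CX [md [A [AX [dA eq]]]]].
have npos : 0 < 2 ^ m by rewrite expn_gt0.
pose x0 := Ordinal npos.
have hX := card_Xn x0.
have Ane : A != set0.
  apply/negP=> /eqP A0; move: eq; rewrite A0 cards0 muln0 hX => /esym/eqP.
  by rewrite muln_eq0 !expn_eq0.
have hn : 2 ^ m = 8 \/ 16 <= 2 ^ m.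
  case: (ltngtP m 3) => [|h|->]; [lia| right | by left].
  by rewrite (_ : 16 = 2 ^ 4) // leq_exp2l.
have hA := anticode_bound x0 AX dA Ane hn.
have hC := code_bound x0 CX md.
by apply: (pow2_arith hm _ hA hC); rewrite eq hX.
Qed.
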